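(* Let $a,b$ be integers with $1\le a<b$. Then there exist an integer $N$ and a fat flat subscheme $W$ of $\mathbb{P}^N$ (over an infinite field $\mathbb{K}$) such that $\widehat{\alpha}(I(W))=b/a$. (For instance, for any $N\ge a$, the star configuration $W=S_N(a,b)$ has this property.)
   Context: The Waldschmidt constant of a homogeneous ideal $I$ is $\widehat{\alpha}(I)=\lim_{m\to\infty}\alpha(I^{(m)})/m$, where $\alpha(J)$ is the least degree of a nonzero element of $J$ and $I^{(m)}$ is the $m$-th symbolic power. A fat flat subscheme of $\mathbb{P}^N$ is a scheme defined by an ideal of the form $\bigcap_j I(\Lambda_j)^{a_j}$ with $\Lambda_j$ linear subspaces and $a_j\ge1$. The star configuration $S_N(a,b)$ ($1\le a\le \min(N,b)$) is the union of the $\binom{b}{a}$ codimension-$a$ linear subspaces $H_{i_1}\cap\dots\cap H_{i_a}$ for $b$ general hyperplanes $H_1,\dots,H_b$ of $\mathbb{P}^N$. *)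

(* Defs.v *)
From HB Require Import structures.
From mathcomp Require Import all_boot all_order all_algebra.
From mathcomp Require Import mpoly.
From Stdlib Require List.
Set Implicit Arguments. Unset Strict Implicit. Unset Printing Implicit Defensive.
Import Order.TTheory GRing.Theory Num.Theory.
Local Open Scope ring_scope.

Section Defs.
Variables (K : fieldType) (n : nat).
(* n = N+1 : number of homogeneous coordinates of P^N *)
Notation P := {mpoly K[n]}.

Definition is_ideal (I : P -> Prop) : Prop :=
  I 0 /\ (forall f g, I f -> I g -> I (f + g)) /\ (forall r f, I f -> I (r * f)).

Definition is_prime_ideal (I : P -> Prop) : Prop :=
  is_ideal I /\ ~ I 1 /\ (forall f g, I (f * g) -> I f \/ I g).

Definition ideal_pow (I : P -> Prop) (m : nat) (f : P) : Prop :=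
  exists (k : nat) (c : 'I_k -> P) (g : 'I_k -> 'I_m -> P),
    (forall i j, I (g i j)) /\ f = \sum_(i < k) c i * \prod_(j < m) g i j.

(* associated primes: primes of the form (I : g) *)
Definition assoc_prime (I : P -> Prop) (Q : P -> Prop) : Prop :=
  is_prime_ideal Q /\ exists g : P, forall h, Q h <-> I (h * g).

(* m-th symbolic power: I^(m) = intersection over Q in Ass(I) of (I^m R_Q cap R) *)
Definition symb_pow (I : P -> Prop) (m : nat) (f : P) : Prop :=
  forall Q, assoc_prime I Q -> exists s : P, ~ Q s /\ ideal_pow I m (s * f).

Definition tdeg (f : P) : nat := (msize f).-1.

Definition alpha_is (J : P -> Prop) (d : nat) : Prop :=
  (exists f, J f /\ f != 0 /\ tdeg f = d) /\
  (forall f, J f -> f != 0 -> (d <= tdeg f)%N).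

Definition waldschmidt_is (I : P -> Prop) (w : rat) : Prop :=
  exists u : nat -> nat,
    (forall m, alpha_is (symb_pow I m.+1) (u m)) /\
    forall eps : rat, 0 < eps -> exists M : nat, forall m, (M <= m)%N ->
      `|(u m)%:R / (m.+1)%:R - w| < eps.

(* A component of a fat flat scheme: the linear subspace of P^N which is the
   projectivization of the span of fc_k vectors of K^n, with multiplicity fc_mult *)
Record fat_comp := FatComp {
  fc_k : nat;
  fc_vec : 'I_fc_k -> 'I_n -> K;
  fc_mult : nat }.

Definition span_pt (L : fat_comp) (c : 'I_(fc_k L) -> K) : 'I_n -> K :=
  fun j => \sum_(i < fc_k L) c i * @fc_vec L i j.

Definition lin_ideal (L : fat_comp) (f : P) : Prop :=
  forall c : 'I_(fc_k L) -> K, f.@[@span_pt L c] = 0.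

(* the linear subspace is nonempty in P^N and the multiplicity is >= 1 *)
Definition valid_comp (L : fat_comp) : Prop :=
  (exists i j, @fc_vec L i j != 0) /\ (1 <= fc_mult L)%N.

Definition fatflat_ideal (W : seq fat_comp) (f : P) : Prop :=
  List.Forall (fun L => ideal_pow (lin_ideal L) (fc_mult L) f) W.

Definition valid_fat (W : seq fat_comp) : Prop := List.Forall valid_comp W.
End Defs.

(* Main.v *)
Require Import Defs.
From HB Require Import structures.
From mathcomp Require Import all_boot all_order all_algebra.
From mathcomp Require Import mpoly.
From Stdlib Require Import Classical ClassicalEpsilon.
From Stdlib Require List.
From mathcomp Require Import zify ring lra.
Import Order.TTheory GRing.Theory Num.Theory.
Local Open Scope ring_scope.

Lemma digits_inj (D k : nat) (f g : 'I_k -> nat) :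
  (forall i, (f i < D)%N) -> (forall i, (g i < D)%N) ->
  (\sum_(i < k) f i * D ^ i = \sum_(i < k) g i * D ^ i)%N -> f =1 g.
Proof.
elim: k f g => [|k IH] f g Hf Hg.
  by move=> _ [m Hm]; exfalso; rewrite ltn0 in Hm.
have D0 : (0 < D)%N by apply: leq_ltn_trans (Hf ord0).
rewrite !big_ord_recl /= !expn0 !muln1.
have E (h : 'I_k.+1 -> nat) : (\sum_(i < k) h (lift ord0 i) * D ^ bump 0 i)%N
   = (\sum_(i < k) h (lift ord0 i) * D ^ i * D)%N.
  by apply: eq_bigr => i _ /=; rewrite /bump /= add1n expnSr mulnA.
rewrite !E -!big_distrl /= => Heq.
have Hm := congr1 (fun x => x %% D)%N Heq.
have Hd := congr1 (fun x => x %/ D)%N Heq.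
rewrite /= ![(f ord0 + _)%N]addnC ![(g ord0 + _)%N]addnC in Hm Hd.
rewrite !modnMDl !modn_small ?Hf ?Hg // in Hm.
rewrite !divnMDl // !divn_small ?Hf ?Hg // !addn0 in Hd.
have IH' := IH (fun i => f (lift ord0 i)) (fun i => g (lift ord0 i)) (fun i => Hf _) (fun i => Hg _) Hd.
move=> i; case: (unliftP ord0 i) => [j ->|->] //.
Qed.

Section NonRoot.
Variable (K : fieldType) (Kinf : forall s : seq K, exists x, x \notin s).

Lemma uniq_seq_ex k : exists s : seq K, uniq s /\ size s = k.
Proof.
elim: k => [|k [s [us ss]]]; first by exists [::].
have [x xs] := Kinf s; exists (x :: s); by rewrite /= xs us ss.
Qed.

Lemma poly_nonroot (q : {poly K}) : q != 0 -> exists t, q.[t] != 0.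
Proof.
move=> q0; have [s [us ss]] := uniq_seq_ex (size q).
case: (boolP (all (root q) s)) => [Ha|].
  by have := max_poly_roots q0 Ha us; rewrite ss ltnn.
by case/allPn => t _ nr; exists t.
Qed.

Variable n : nat.
Definition Edig (D : nat) (m : 'X_{1..n}) : nat := (\sum_(i < n) m i * D ^ i)%N.
Definition Kron (D : nat) (p : {mpoly K[n]}) : {poly K} :=
  mmap (@polyC K) (fun i => 'X^(D ^ i)) p.

Lemma mmap1_Kron D m : mmap1 (fun i : 'I_n => ('X^(D ^ i) : {poly K})) m = 'X^(Edig D m).
Proof.
rewrite /mmap1 /Edig -prodrXr; apply: eq_bigr => i _.
by rewrite -exprM mulnC.
Qed.

Lemma KronE D p : Kron D p = \sum_(m <- msupp p) (p@_m)%:P * 'X^(Edig D m).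
Proof. by rewrite /Kron /mmap; apply: eq_bigr => m _; rewrite mmap1_Kron. Qed.

Lemma Kron_horner D p t : (Kron D p).[t] = p.@[fun i => t ^+ (D ^ i)].
Proof.
rewrite KronE mevalE horner_sum; apply: eq_bigr => m _.
rewrite hornerCM hornerXn; congr (_ * _).
rewrite /Edig -prodrXr; apply: eq_bigr => i _.
by rewrite -exprM mulnC.
Qed.

Lemma mnm_le_msize (p : {mpoly K[n]}) m i : m \in msupp p -> (m i < msize p)%N.
Proof.
move=> /msize_mdeg_lt; apply: leq_ltn_trans.
by rewrite mdegE (bigD1 i) //= leq_addr.
Qed.

Lemma Kron_coef p m0 : m0 \in msupp p ->
  (Kron (msize p) p)`_(Edig (msize p) m0) = p@_m0.
Proof.
move=> m0p; rewrite KronE coef_sum.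
have -> : p@_m0 = (\sum_(m <- msupp p) p@_m *: 'X_[m])@_m0 by rewrite -mpolyE.
rewrite raddf_sum /=; apply: eq_big_seq => m mp.
rewrite coefCM coefXn mcoeffZ mcoeffX.
suff -> : (Edig (msize p) m0 == Edig (msize p) m) = (m == m0) by [].
apply/eqP/eqP => [E|<-] //.
apply/mnmP => i; symmetry.
apply: (@digits_inj (msize p) n (fun i => m0 i) (fun i => m i)) => //.
  by move=> j; apply: mnm_le_msize.
by move=> j; apply: mnm_le_msize.
Qed.

Lemma mpoly_nonroot (p : {mpoly K[n]}) : p != 0 -> exists v, p.@[v] != 0.
Proof.
move=> p0.
have Kp : Kron (msize p) p != 0.
  apply/eqP => E; have := @Kron_coef p _ (mlead_supp p0).
  rewrite E coef0 => /esym /eqP; rewrite mcoeff_eq0 mlead_supp //.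
have [t Ht] := @poly_nonroot _ Kp.
by exists (fun i => t ^+ (msize p ^ i)); rewrite -Kron_horner.
Qed.

Lemma mpoly_zero (p : {mpoly K[n]}) : (forall v, p.@[v] = 0) -> p = 0.
Proof.
move=> H; apply/eqP; apply/negPn/negP => /(@mpoly_nonroot p) [v]; by rewrite H eqxx.
Qed.
End NonRoot.

Set Implicit Arguments. Unset Strict Implicit.

Lemma rmorph_mmap (n : nat) (R : nzRingType) (S S' : comNzRingType)
  (g : {rmorphism S -> S'}) (f : R -> S) (h : 'I_n -> S) p :
  g (mmap f h p) = mmap (g \o f) (g \o h) p.
Proof.
rewrite /mmap rmorph_sum; apply: eq_bigr => m _.
rewrite rmorphM /mmap1 rmorph_prod; congr (_ * _); apply: eq_bigr => i _.
by rewrite rmorphXn.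
Qed.

Lemma mmap_ext (n : nat) (R : nzRingType) (S : nzRingType)
  (f1 f2 : R -> S) (h1 h2 : 'I_n -> S) p :
  f1 =1 f2 -> h1 =1 h2 -> mmap f1 h1 p = mmap f2 h2 p.
Proof.
move=> ef eh; rewrite /mmap; apply: eq_bigr => m _.
by rewrite ef (mmap1_eq _ eh).
Qed.

Section Low.
Variable R : idomainType.
Implicit Types p q : {poly R}.
Definition low (m : nat) (p : {poly R}) := forall k, (k < m)%N -> p`_k = 0.

Lemma low0 p : low 0 p. Proof. by []. Qed.
Lemma lowD m p q : low m p -> low m q -> low m (p + q).
Proof. by move=> hp hq k km; rewrite coefD hp ?hq ?addr0. Qed.
Lemma low_zero m : low m 0. Proof. by move=> k _; rewrite coef0. Qed.
Lemma low_sum m (I : Type) (r : seq I) (F : I -> {poly R}) :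
  (forall i, low m (F i)) -> low m (\sum_(i <- r) F i).
Proof.
move=> H; apply: (big_ind (low m)); [exact: low_zero|exact: lowD|by move=> i _].
Qed.
Lemma lowM i j p q : low i p -> low j q -> low (i + j) (p * q).
Proof.
move=> hp hq k kij; rewrite coefM big1 // => l _.
have [li|il] := ltnP l i; first by rewrite hp ?mul0r.
rewrite hq ?mulr0 //.
have := ltn_ord l; rewrite ltnS => lk.
lia.
Qed.
Lemma lowMl m p q : low m q -> low m (p * q).
Proof. by move=> hq; have := lowM (low0 p) hq; rewrite add0n. Qed.
Lemma low_prod m (F : 'I_m -> {poly R}) :
  (forall j, low 1 (F j)) -> low m (\prod_(j < m) F j).
Proof.
elim: m F => [|m IH] F H.
  by rewrite big_ord0; apply: low0.
rewrite big_ord_recr /=; have := lowM (IH (fun j => F (widen_ord (leqnSn m) j)) (fun j => H _)) (H ord_max).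
by rewrite addn1.
Qed.
Lemma low_cancel m p q : p`_0 != 0 -> low m (p * q) -> low m q.
Proof.
move=> p0 hpq k; elim: k {-2}k (leqnn k) => [|K IH] k kK km.
  move: kK; rewrite leqn0 => /eqP ->.
  have := hpq 0%N; rewrite (leq_ltn_trans _ km) // => /(_ isT).
  rewrite coefM big_ord1 subnn => /eqP; rewrite mulf_eq0 (negbTE p0) /=.
  by move/eqP.
have := hpq k km; rewrite coefM big_ord_recl subn0 big1.
  by rewrite addr0 => /eqP; rewrite mulf_eq0 (negbTE p0) /= => /eqP.
move=> l _; have lk := ltn_ord l; rewrite lift0 IH ?mulr0 //; lia.
Qed.
End Low.

Section Coord.
Variable (K : fieldType) (Kinf : forall s : seq K, exists x, x \notin s).
Variable n : nat.
Notation P := {mpoly K[n]}.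
Implicit Types (T : {set 'I_n}) (f g s : P).

Definition zeroT (T : {set 'I_n}) (c : 'I_n -> K) : 'I_n -> K :=
  fun j => if j \in T then 0 else c j.
Definition PT (T : {set 'I_n}) (f : P) : Prop := forall c, f.@[zeroT T c] = 0.
Definition phiT (T : {set 'I_n}) (f : P) : P :=
  mmap (@mpolyC n K) (fun i => if i \in T then 0 else 'X_i) f.

Lemma meval_mmapC v (h : 'I_n -> P) (p : P) :
  (mmap (@mpolyC n K) h p).@[v] = p.@[fun i => (h i).@[v]].
Proof.
rewrite /mmap raddf_sum /= mevalE; apply: eq_bigr => m _.
rewrite mevalM mevalC /mmap1 rmorph_prod /=; congr (_ * _); apply: eq_bigr => i _.
by rewrite rmorphXn.
Qed.

Lemma phiT_eval T f c : (phiT T f).@[c] = f.@[zeroT T c].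
Proof.
rewrite meval_mmapC; apply: meval_eq => i; rewrite /zeroT.
by case: ifP => _; rewrite ?meval0 ?mevalXU.
Qed.

Lemma PT_phi T f : PT T f <-> phiT T f = 0.
Proof.
split=> [H|H c]; last by rewrite -phiT_eval H meval0.
by apply: (@mpoly_zero K Kinf n) => v; rewrite phiT_eval.
Qed.

Lemma phiTM T f g : phiT T (f * g) = phiT T f * phiT T g.
Proof. by rewrite /phiT rmorphM. Qed.

Lemma PT_ideal T : is_ideal (PT T).
Proof.
split; first by move=> c; rewrite meval0.
split; first by move=> f g hf hg c; rewrite mevalD hf hg addr0.
by move=> r f hf c; rewrite mevalM hf mulr0.
Qed.

Lemma PT_prime T : is_prime_ideal (PT T).
Proof.
split; first exact: PT_ideal.
split; first by move/(_ (fun _ => 0)); rewrite meval1 => /eqP; rewrite oner_eq0.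
move=> f g; rewrite !PT_phi phiTM => /eqP; rewrite mulf_eq0.
by case/orP => /eqP; [left|right].
Qed.

Definition degT (T : {set 'I_n}) (m : 'X_{1..n}) : nat := (\sum_(i in T) m i)%N.

Definition psiT (T : {set 'I_n}) (f : P) : {poly P} :=
  mmap (polyC \o @mpolyC n K) (fun i => if i \in T then 'X * ('X_i)%:P else ('X_i)%:P) f.

Lemma psiTM T f g : psiT T (f * g) = psiT T f * psiT T g.
Proof. by rewrite /psiT rmorphM. Qed.

Lemma psiT_sum T (I : Type) (r : seq I) (F : I -> P) :
  psiT T (\sum_(i <- r) F i) = \sum_(i <- r) psiT T (F i).
Proof. by rewrite /psiT raddf_sum. Qed.

Lemma psiT_prod T m (F : 'I_m -> P) :
  psiT T (\prod_(i < m) F i) = \prod_(i < m) psiT T (F i).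
Proof. by rewrite /psiT rmorph_prod. Qed.

Lemma psiT_coef0 T f : (psiT T f)`_0 = phiT T f.
Proof.
rewrite -horner_coef0 -[_.[0]]/(horner_eval 0 (psiT T f)) /psiT rmorph_mmap.
apply: mmap_ext => [c|i] /=; rewrite /horner_eval ?hornerC //.
by case: ifP => _; rewrite ?hornerM ?hornerX ?mul0r ?hornerC.
Qed.

Lemma mmap1_psi T m :
  mmap1 (fun i => if i \in T then 'X * ('X_i)%:P else ('X_i)%:P) m
  = ('X_[m] : P)%:P * 'X^(degT T m).
Proof.
rewrite /mmap1 /degT -prodrXr mpolyXE_id rmorph_prod /= [X in _ * X]big_mkcond /= -big_split /=.
apply: eq_bigr => i _; case: ifP => _; last by rewrite mulr1 rmorphXn.
rewrite exprMn_comm; last exact: mulrC. by rewrite rmorphXn [LHS]mulrC.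
Qed.

Lemma psiT_coef T f k m :
  ((psiT T f)`_k)@_m = f@_m * (degT T m == k)%:R.
Proof.
rewrite /psiT /mmap coef_sum raddf_sum /=.
under eq_bigr => mu _ do rewrite mmap1_psi mulrA -rmorphM coefCM coefXn /=
   mul_mpolyC mulr_natr mcoeffMn mcoeffZ mcoeffX.
have -> : f@_m = (\sum_(mu <- msupp f) f@_mu *: 'X_[mu])@_m by rewrite -mpolyE.
rewrite raddf_sum /= big_distrl /=; apply: eq_bigr => mu _.
rewrite mcoeffZ mcoeffX; case: eqP => [->|_]; last by rewrite mulr0 mul0rn mul0r.
by rewrite [(k == _)]eq_sym mulr_natr.
Qed.

Lemma order_bound (J : P -> Prop) T M s f :
  (forall g, J g -> PT T g) -> ~ PT T s -> ideal_pow J M (s * f) ->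
  forall m, m \in msupp f -> (M <= degT T m)%N.
Proof.
move=> JT ns [k [c [g [Hg E]]]].
have Hl : low M (psiT T (s * f)).
  rewrite E psiT_sum; apply: low_sum => i; rewrite psiTM; apply: lowMl.
  rewrite psiT_prod; apply: low_prod => j l; rewrite ltnS leqn0 => /eqP ->.
  by rewrite psiT_coef0; apply/PT_phi; apply: JT.
rewrite psiTM in Hl.
have s0 : (psiT T s)`_0 != 0 by rewrite psiT_coef0; apply/eqP => /PT_phi.
have Hf := low_cancel s0 Hl.
move=> m mf; rewrite leqNgt; apply/negP => /Hf H.
have := psiT_coef T f (degT T m) m; rewrite H mcoeff0 eqxx mulr1 => /esym /eqP.
by rewrite mcoeff_eq0 mf.
Qed.

Definition compT (T : {set 'I_n}) : fat_comp K n :=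
  @FatComp K n n (fun i j : 'I_n => if (i == j) && (j \notin T) then 1 else 0) 1%N.

Lemma lin_compT T f : lin_ideal (compT T) f <-> PT T f.
Proof.
have E (c : 'I_n -> K) : @span_pt K n (compT T) c =1 zeroT T c.
  move=> j; rewrite /span_pt /zeroT /= (bigD1 j) //= big1 => [|i /negbTE ij].
    by rewrite eqxx /=; case: (j \in T); rewrite /= ?mulr0 ?mulr1 addr0.
  by rewrite ij mulr0.
split=> H c; first by rewrite -(H c); apply: meval_eq => j; rewrite E.
by rewrite (meval_eq _ (E c)).
Qed.

Lemma ideal_pow1 (I : P -> Prop) f : is_ideal I -> (ideal_pow I 1 f <-> I f).
Proof.
move=> [I0 [ID IM]]; split.
  move=> [k [c [g [Hg ->]]]]; apply: (big_ind I) => // i _.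
  by rewrite big_ord1; apply: IM.
move=> Hf; exists 1%N, (fun _ => 1), (fun _ _ => f); split => //.
by rewrite !big_ord1 mul1r.
Qed.
End Coord.

Lemma Forall_map (T : eqType) (U : Type) (Pr : U -> Prop) (F : T -> U) (s : seq T) :
  List.Forall Pr [seq F x | x <- s] <-> (forall x, x \in s -> Pr (F x)).
Proof.
elim: s => [|x s IH] /=; first by split => // _; constructor.
rewrite List.Forall_cons_iff IH; split.
  by move=> [H1 H2] y; rewrite in_cons => /orP [/eqP ->|]; [|apply: H2].
move=> H; split; first by apply: H; rewrite mem_head.
by move=> y ys; apply: H; rewrite in_cons ys orbT.
Qed.

Lemma ideal_pow_ext (K : fieldType) (n : nat) (I J : {mpoly K[n]} -> Prop) m f :
  (forall g, I g <-> J g) -> ideal_pow I m f -> ideal_pow J m f.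
Proof.
move=> E [k [c [g [Hg Hf]]]]; exists k, c, g; split => // i j; exact/E.
Qed.

Lemma min_ex (Pd : nat -> Prop) : (exists d, Pd d) ->
  exists d, Pd d /\ forall d', Pd d' -> (d <= d')%N.
Proof.
move=> [d0 H0].
suff : forall k d, (d <= k)%N -> Pd d -> exists d, Pd d /\ forall d', Pd d' -> (d <= d')%N.
  by move=> /(_ d0 d0 (leqnn _) H0).
elim=> [|k IH] d dk Pd0.
  exists d; split => // d' _; move: dk; rewrite leqn0 => /eqP ->; exact: leq0n.
case: (classic (exists d', (d' < d)%N /\ Pd d')) => [[d' [d'd Pd']]|Hn].
  apply: (IH d') => //; lia.
exists d; split => // d' Pd'; rewrite leqNgt; apply/negP => dd'.
by apply: Hn; exists d'.
Qed.

Section Main.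
Variable (K : fieldType) (Kinf : forall s : seq K, exists x, x \notin s).
Variable (N a : nat).
Hypothesis (a1 : (1 <= a)%N) (aN : (a < N.+1)%N).
Notation n := N.+1.
Notation P := {mpoly K[n]}.
Implicit Types (T S : {set 'I_n}) (f g : P) (c v : 'I_n -> K).

Definition win (i : 'I_n) : {set 'I_n} := [set (i + inZp (val j))%R | j : 'I_a].

Lemma win_inj (i : 'I_n) : injective (fun j : 'I_a => (i + inZp (val j))%R : 'I_n).
Proof.
move=> j j' /addrI /(congr1 val) /=; rewrite !modn_small => [E||]; last 2 first.
- by apply: ltn_trans aN.
- by apply: ltn_trans aN.
exact: val_inj.
Qed.

Lemma card_win i : #|win i| = a.
Proof. by rewrite card_imset ?card_ord //; apply: win_inj. Qed.

Lemma win_notin i : exists j, j \notin win i.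
Proof.
case: (pickP [pred j | j \notin win i]) => [j Hj|H]; first by exists j.
have : win i = [set: 'I_n].
  by apply/setP => j; rewrite inE; have := H j; rewrite /= => /negbT; rewrite negbK.
move=> Ew; have := card_win i; rewrite Ew cardsT card_ord => E.
by move: aN; rewrite E ltnn.
Qed.

Lemma win_cases (S T : {set 'I_n}) (i j : 'I_n) : S = win i -> T = win j ->
  S = T \/ exists k, k \in S /\ k \notin T.
Proof.
move=> -> ->; case: (boolP (win i \subset win j)) => H.
  left; apply/eqP; rewrite eqEcard H !card_win leqnn //.
by right; case/subsetPn: H => k H1 H2; exists k.
Qed.

Lemma degT_win i (m : 'X_{1..n}) :
  degT (win i) m = (\sum_(j < a) m (i + inZp (val j))%R)%N.
Proof. rewrite /degT big_imset //= => x y _ _; exact: win_inj. Qed.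

Lemma sum_degT (m : 'X_{1..n}) : (\sum_(i < n) degT (win i) m)%N = (a * mdeg m)%N.
Proof.
under eq_bigr => i _ do rewrite degT_win.
rewrite exchange_big /= mdegE.
rewrite (eq_bigr (fun _ => \sum_(i < n) m i)%N) ?sum_nat_const ?card_ord //.
move=> j _; symmetry; rewrite (reindex_inj (addIr (inZp (val j) : 'I_n))) /=.
by [].
Qed.

Definition W : seq (fat_comp K n) := [seq compT K (win i) | i <- enum 'I_n].
Definition I := fatflat_ideal W.

Lemma I_iff f : I f <-> forall i, PT (win i) f.
Proof.
rewrite /I /fatflat_ideal /W Forall_map; split=> H i.
  have := H i; rewrite mem_enum => /(_ isT) /=.
  move/(ideal_pow_ext (J := PT (win i))) => /(_ (fun g => lin_compT _ _)).
  by move/ideal_pow1 => /(_ (PT_ideal _ _)).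
move=> _ /=; apply: (ideal_pow_ext (I := PT (win i))).
  by move=> g; split => /lin_compT.
by apply/ideal_pow1 => //; apply: PT_ideal.
Qed.

Lemma valid_W : valid_fat W.
Proof.
rewrite /valid_fat /W Forall_map => i _; split => //=.
have [j Hj] := win_notin i; exists j, j; rewrite eqxx Hj /=; exact: oner_neq0.
Qed.

Definition rT (T : {set 'I_n}) : P := \prod_(j | j \notin T) 'X_j.

Lemma rT_eval T v : (rT T).@[v] = \prod_(j | j \notin T) v j.
Proof. by rewrite /rT rmorph_prod /=; apply: eq_bigr => j _; rewrite mevalXU. Qed.
Lemma rT_zero T S c : (exists k, k \in S /\ k \notin T) -> (rT T).@[zeroT S c] = 0.
Proof.
move=> [k [kS kT]]; rewrite rT_eval (bigD1 k) //= /zeroT kS mul0r //.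
Qed.

Lemma rT_one T : (rT T).@[zeroT T (fun _ => 1)] = 1.
Proof. by rewrite rT_eval big1 // => j /negbTE jT; rewrite /zeroT jT. Qed.

Lemma PT_mulr T f g : PT T f -> PT T (f * g).
Proof. by move=> H c; rewrite mevalM H mul0r. Qed.
Lemma PT_mull T f g : PT T g -> PT T (f * g).
Proof. by move=> H c; rewrite mevalM H mulr0. Qed.

Lemma notPT_rT T : ~ PT T (rT T).
Proof. by move/(_ (fun _ => 1)); rewrite rT_one => /eqP; rewrite oner_eq0. Qed.

Lemma assoc_win i : assoc_prime I (PT (win i)).
Proof.
split; first exact: PT_prime.
exists (rT (win i)) => h; split.
  move=> Hh; apply/I_iff => i'.
  have [E|Ex] := win_cases (erefl (win i')) (erefl (win i)).
    by rewrite E; apply: PT_mulr.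
  by apply: PT_mull => c; apply: rT_zero.
move/I_iff => /(_ i) /(proj2 (proj2 (PT_prime Kinf (win i)))) [] //.
by move/notPT_rT.
Qed.

Lemma lower_bound M f : symb_pow I M f -> f != 0 -> (n * M <= a * tdeg f)%N.
Proof.
move=> Hs f0.
have mf := mlead_supp f0.
have H i : (M <= degT (win i) (mlead f))%N.
  have [s [ns Hsf]] := Hs _ (assoc_win i).
  apply: (order_bound Kinf (J := I) _ ns Hsf mf) => g /I_iff; apply.
have : (n * M <= \sum_(i < n) degT (win i) (mlead f))%N.
  rewrite -[X in (X * M)%N]card_ord -sum_nat_const; apply: leq_sum => i _; exact: H.
rewrite sum_degT => /leq_trans; apply; rewrite leq_mul2l; apply/orP; right.
by have := msize_mdeg_lt mf; rewrite /tdeg; case: (msize f).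
Qed.

Definition prods (J : P -> Prop) (m : nat) (x : P) :=
  exists l : seq P, size l = m /\ (forall y, y \in l -> J y) /\ x = \prod_(y <- l) y.

Lemma prods_cat J m1 m2 x y : prods J m1 x -> prods J m2 y -> prods J (m1 + m2) (x * y).
Proof.
move=> [l1 [s1 [h1 ->]]] [l2 [s2 [h2 ->]]]; exists (l1 ++ l2).
rewrite size_cat s1 s2 big_cat; split => //; split => // z.
by rewrite mem_cat => /orP [/h1|/h2].
Qed.

Lemma prods_pow J m x q : prods J m x -> prods J (m * q) (x ^+ q).
Proof.
move=> H; elim: q => [|q IH].
  by exists [::]; rewrite muln0 expr0 big_nil.
by rewrite mulnS exprS; apply: prods_cat.
Qed.

Lemma prods_pow_ideal J m d x : prods J (m + d) x -> ideal_pow J m x.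
Proof.
move=> [l [sl [hl ->]]].
exists 1%N, (fun _ => \prod_(y <- drop m l) y), (fun _ j => nth 0 l j); split.
  move=> _ j; apply: hl; apply: mem_nth; rewrite sl; apply: leq_trans (ltn_ord j) _; exact: leq_addr.
rewrite big_ord1 -{1}(cat_take_drop m l) big_cat /= mulrC; congr (_ * _).
have st : size (take m l) = m by rewrite size_take sl; case: ltnP => //; lia.
rewrite (big_nth 0) st big_mkord; apply: eq_bigr => j _; rewrite nth_take //.
Qed.

Lemma prodX_split T : \prod_(j < n) ('X_j : P) = (\prod_(t in T) 'X_t) * rT T.
Proof. by rewrite /rT (bigID (fun j => j \in T)). Qed.

Lemma gen_in_I i t : t \in win i -> I ('X_t * rT (win i)).
Proof.
move=> tT; apply/I_iff => i' c.
rewrite mevalM mevalXU.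
have [E|Ex] := win_cases (erefl (win i')) (erefl (win i)).
  by rewrite /zeroT E tT mul0r.
by rewrite rT_zero // mulr0.
Qed.

Definition qq M := (M %/ a).+1.
Definition hq M : P := (\prod_(j < n) 'X_j) ^+ qq M.

Lemma hq_ok M : (0 < M)%N -> symb_pow I M (hq M).
Proof.
move=> M0 Q [[[Q0 [QD QM]] [Q1 Qp]] [g Hg]].
have nIg : ~ I g by move=> Ig; apply: Q1; apply/Hg; rewrite mul1r.
have [i ni] : exists i, ~ PT (win i) g.
  apply: NNPP => Hn; apply: nIg; apply/I_iff => i; apply: NNPP => Hi; apply: Hn; by exists i.
set T := win i.
have QT h : Q h -> PT T h.
  move/Hg/I_iff/(_ i)/(proj2 (proj2 (PT_prime Kinf T))) => [] //.
exists ((rT T) ^+ (a.-1 * qq M)); split.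
  move/QT/(_ (fun _ => 1)); rewrite rmorphXn /= rT_one expr1n => /eqP.
  by rewrite oner_eq0.
have Hb : prods I a ((\prod_(t in T) 'X_t) * rT T ^+ a).
  exists [seq 'X_t * rT T | t <- enum T]; split.
    by rewrite size_map -cardE card_win.
  split; first by move=> y /mapP [t]; rewrite mem_enum => tT ->; apply: gen_in_I.
  by rewrite big_map big_enum /= big_split /= prodr_const card_win.
have Hp := prods_pow (qq M) Hb.
have aq : (M <= a * qq M)%N by rewrite /qq mulnC; apply: ltnW; apply: ltn_ceil.
rewrite -(subnKC aq) in Hp.
suff -> : (rT T ^+ (a.-1 * qq M)) * hq M = ((\prod_(t in T) 'X_t) * rT T ^+ a) ^+ qq M.
  exact: (prods_pow_ideal Hp).
rewrite /hq (prodX_split T) exprMn exprMn -!exprM mulrC -mulrA -exprD.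
congr (_ * _ ^+ _).
by case: a a1 => // a' _ /=; rewrite mulSn.
Qed.

Lemma tdeg_hq M : tdeg (hq M) = (n * qq M)%N.
Proof.
have -> : hq M = 'X_[(\sum_(j < n) U_(j)) *+ qq M].
  rewrite -mpolyXn /hq; congr (_ ^+ _).
  by rewrite (big_morph (fun m => 'X_[m] : P) (@mpolyXD _ _) (@mpolyX0 _ _)).
rewrite /tdeg msizeX /= mdegMn mdeg_sum.
by rewrite (eq_bigr (fun _ => 1%N)) ?sum_nat_const ?card_ord ?muln1 // => j _; rewrite mdeg1.
Qed.

Lemma hq_neq0 M : hq M != 0.
Proof.
apply/eqP => E; have := tdeg_hq M; rewrite E /tdeg msize0 /=.
move=> /esym /eqP; rewrite muln_eq0 /=; by [].
Qed.

Lemma alpha_ex M : (0 < M)%N -> exists d, alpha_is (symb_pow I M) d /\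
  (n * M <= a * d)%N /\ (d <= n * qq M)%N.
Proof.
move=> M0.
have Hex : exists d, exists f, symb_pow I M f /\ f != 0 /\ tdeg f = d.
  by exists (tdeg (hq M)), (hq M); split; [apply: hq_ok|split; [apply: hq_neq0|]].
have [d [[f [Hf [f0 fd]]] Hmin]] := min_ex Hex.
exists d; split.
  split; first by exists f.
  by move=> g Hg g0; apply: Hmin; exists g.
split; first by rewrite -fd; apply: lower_bound.
rewrite -(tdeg_hq M); apply: Hmin; exists (hq M); split; [exact: hq_ok | split; [exact: hq_neq0 | by []]].
Qed.

End Main.

Unset Implicit Arguments. Set Strict Implicit.

Lemma main (K : fieldType) (Kinf : forall s : seq K, exists x, x \notin s)
  (N a : nat) (a1 : (1 <= a)%N) (aN : (a < N.+1)%N) :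
  waldschmidt_is (@I K N a) ((N.+1)%:R / a%:R).
Proof.
have H m : exists d, alpha_is (symb_pow (@I K N a) m.+1) d /\
   (N.+1 * m.+1 <= a * d)%N /\ (d <= N.+1 * qq a m.+1)%N.
  exact: (alpha_ex Kinf a1 aN (M := m.+1)).
pose u m := proj1_sig (constructive_indefinite_description _ (H m)).
have Hu m := proj2_sig (constructive_indefinite_description _ (H m)).
exists u; split; first by move=> m; exact: (proj1 (Hu m)).
move=> eps eps0.
have hb := @archi_boundP rat (N.+1%:R / eps) ltac:(apply: divr_ge0 => //; exact: ltW).
exists (Num.Def.archi_bound (N.+1%:R / eps)) => m Hm.
have [_ [h1 h2]] := Hu m; rewrite -/(u m) in h1 h2.
have h3 : (a * u m <= N.+1 * (m.+1 + a))%N.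
  apply: leq_trans (_ : (a * (N.+1 * qq a m.+1) <= _)%N); first by rewrite leq_mul2l h2 orbT.
  rewrite mulnCA leq_mul2l; apply/orP; right.
  rewrite /qq mulnS addnC leq_add2r mulnC; exact: leq_trunc_div.
move: h1 h3; rewrite -!(ler_nat rat) !natrM !natrD.
have hm : (Num.Def.archi_bound (N.+1%:R / eps))%:R <= m%:R :> rat by rewrite ler_nat.
have hmp : (m.+1)%:R = m%:R + 1 :> rat by rewrite -natr1.
move: hb hm; rewrite hmp.
set X := (u m)%:R; set Nn := (N.+1)%:R; set A := a%:R; set Mm := m%:R.
set B := (Num.Def.archi_bound _)%:R.
have A0 : 0 < A by rewrite ltr0n.
have M0 : 0 <= Mm by rewrite ler0n.
move=> hb hm h1 h3.
have hb' : Nn < eps * (Mm + 1).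
  rewrite -ltr_pdivrMl; last lra.
  rewrite mulrC; apply: lt_le_trans hb _; lra.
have Ed : (X / (Mm + 1) - Nn / A) * (A * (Mm + 1)) = A * X - Nn * (Mm + 1).
  by field; apply/andP; split; apply: lt0r_neq0 => //; lra.
set d := X / (Mm + 1) - Nn / A in Ed *.
have P0 : 0 < A * (Mm + 1) by apply: mulr_gt0 => //; lra.
have d0 : 0 <= d by rewrite -(pmulr_lge0 _ P0) Ed; lra.
rewrite ger0_norm // -(ltr_pM2r P0) Ed.
have h4 : Nn * A < eps * (Mm + 1) * A by rewrite ltr_pM2r.
nra.
Qed.

Theorem theorem2p9 (K : fieldType)
  (K_infinite : forall s : seq K, exists x : K, x \notin s)
  (a b : nat) :
  (1 <= a)%N -> (a < b)%N ->
  exists (N : nat) (W : seq (fat_comp K N.+1)),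
    valid_fat W /\ waldschmidt_is (fatflat_ideal W) (b%:R / a%:R).
Proof.
case: b => [//|N] a1 aN.
exists N, (W K N a); split; first exact: valid_W.
exact: (@main K K_infinite N a a1 aN).
Qed.
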